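(* Let $\mathcal{G}=(\mathcal{N},\mathcal{P})$ be a connected directed graph with nodes $\mathcal{N}=\{1,\dots,N\}$, edges $\mathcal{P}$ written $\ell=(m,n)$, and edge-node incidence matrix $\mathbf{A}\in\mathbb{R}^{P\times N}$ ($A_{\ell,m}=+1$, $A_{\ell,n}=-1$ for $\ell=(m,n)$, zeros elsewhere in row $\ell$). The edges are partitioned into compressors $\mathcal{P}_a$ and lossy pipes $\bar{\mathcal{P}}_a=\mathcal{P}\setminus\mathcal{P}_a$. Assume (A1) no compressor edge belongs to a cycle of $\mathcal{G}$, and (A2) every edge of $\mathcal{G}$ belongs to at most one cycle. Fix a reference node $r$ with given value $\psi_r$, injections $\mathbf{q}\in\mathbb{R}^N$ with $\mathbf{1}^\top\mathbf{q}=0$, $a_\ell>0$ for $\ell\in\bar{\mathcal{P}}_a$, and $\alpha_\ell>0$ for $\ell\in\mathcal{P}_a$. Problem (G1): find $(\boldsymbol{\phi},\boldsymbol{\psi})\in\mathbb{R}^P\times\mathbb{R}^N$ with the given $\psi_r$ such that $\mathbf{A}^\top\boldsymbol{\phi}=\mathbf{q}$; $\psi_m-\psi_n=a_\ell\,\mathrm{sign}(\phi_\ell)\phi_\ell^2$ for all $\ell=(m,n)\in\bar{\mathcal{P}}_a$; $\psi_n\ge0$ for all $n\in\mathcal{N}$; and $\psi_n=\alpha_\ell\psi_m$, $\phi_\ell\ge0$ for all $\ell=(m,n)\in\mathcal{P}_a$. Problem (G2), for a constant $M>0$: minimize $r(\boldsymbol{\psi}):=\sum_{(m,n)\in\bar{\mathcal{P}}_a}|\psi_m-\psi_n|$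 over $\boldsymbol{\phi}\in\mathbb{R}^P$, $\boldsymbol{\psi}\in\mathbb{R}^N$ (with the given $\psi_r$) and $\mathbf{x}\in\{0,1\}^{\bar{\mathcal{P}}_a}$, subject to $\mathbf{A}^\top\boldsymbol{\phi}=\mathbf{q}$; $\psi_n=\alpha_\ell\psi_m$ and $\phi_\ell\ge0$ for all $\ell=(m,n)\in\mathcal{P}_a$; and, for every $\ell=(m,n)\in\bar{\mathcal{P}}_a$: $-M(1-x_\ell)\le\phi_\ell\le Mx_\ell$, $-M(1-x_\ell)\le\psi_m-\psi_n-a_\ell\phi_\ell^2$, and $\psi_m-\psi_n+a_\ell\phi_\ell^2\le Mx_\ell$. If (G1) is feasible, then for $M$ sufficiently large, for every minimizer $(\boldsymbol{\phi},\boldsymbol{\psi},\mathbf{x})$ of (G2), the pair $(\boldsymbol{\phi},\boldsymbol{\psi})$ solves (G1).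
   Context: $\mathrm{sign}(x)=+1$ for $x>0$, $-1$ for $x<0$, $0$ for $x=0$. A cycle is a closed path in the underlying undirected graph with no repeated edges or nodes. $M$ is a ''big-M'' constant, which the paper takes to be large. *)

(* Defs.v *)
From mathcomp Require Import all_boot all_order all_algebra.
From mathcomp Require Import reals.
Set Implicit Arguments. Unset Strict Implicit. Unset Printing Implicit Defensive.
Import Order.TTheory GRing.Theory Num.Theory.
Local Open Scope ring_scope.

Section Graph.
Variables (N P : nat) (src dst : 'I_P -> 'I_N).

Definition joins (l : 'I_P) (u v : 'I_N) : bool :=
  ((src l == u) && (dst l == v)) || ((src l == v) && (dst l == u)).

Definition adj : rel 'I_N := fun u v => [exists l, joins l u v].

Definition connected_graph : Prop := forall u v : 'I_N, connect adj u v.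

(* no self-loops (so that the incidence matrix is well defined) *)
Definition loopless : Prop := forall l : 'I_P, src l != dst l.

(* a cycle of length k: closed path v_0 -e_0- v_1 - ... - v_{k-1} -e_{k-1}- v_0
   in the underlying undirected graph, with no repeated edges or nodes *)
Definition is_cycle (k : nat) (es : 'I_k -> 'I_P) (vs : 'I_k -> 'I_N) : Prop :=
  [/\ (0 < k)%N, injective es, injective vs &
      forall i : 'I_k, joins (es i) (vs i) (vs (ordS i))].

Definition on_cycle (l : 'I_P) : Prop :=
  exists k (es : 'I_k -> 'I_P) (vs : 'I_k -> 'I_N), is_cycle es vs /\ l \in codom es.

(* every edge belongs to at most one cycle (cycles identified by edge sets) *)
Definition at_most_one_cycle : Prop :=
  forall (l : 'I_P) k1 (es1 : 'I_k1 -> 'I_P) (vs1 : 'I_k1 -> 'I_N)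
                    k2 (es2 : 'I_k2 -> 'I_P) (vs2 : 'I_k2 -> 'I_N),
    is_cycle es1 vs1 -> is_cycle es2 vs2 ->
    l \in codom es1 -> l \in codom es2 -> codom es1 =i codom es2.

End Graph.

Section Gas.
Variables (R : realType) (N P : nat) (src dst : 'I_P -> 'I_N).

Definition incidence : 'M[R]_(P, N) :=
  \matrix_(l < P, n < N)
    (if src l == n then 1 else if dst l == n then -1 else 0).

Variables (comp : pred 'I_P) (r : 'I_N) (psir : R) (q : 'cV[R]_N)
          (a alpha : 'I_P -> R).

Definition G1_sol (phi : 'cV[R]_P) (psi : 'cV[R]_N) : Prop :=
  [/\ psi r 0 = psir,
      incidence^T *m phi = q,
      forall l, ~~ comp l ->
        psi (src l) 0 - psi (dst l) 0 = a l * Num.sg (phi l 0) * phi l 0 ^+ 2,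
      forall n, 0 <= psi n 0 &
      forall l, comp l -> psi (dst l) 0 = alpha l * psi (src l) 0 /\ 0 <= phi l 0].

Definition G2_obj (psi : 'cV[R]_N) : R :=
  \sum_(l < P | ~~ comp l) `|psi (src l) 0 - psi (dst l) 0|.

Definition G2_feas (M : R) (phi : 'cV[R]_P) (psi : 'cV[R]_N) (x : 'I_P -> bool)
  : Prop :=
  [/\ psi r 0 = psir,
      incidence^T *m phi = q,
      forall l, comp l -> psi (dst l) 0 = alpha l * psi (src l) 0 /\ 0 <= phi l 0 &
      forall l, ~~ comp l ->
        [/\ - M * (1 - (x l)%:R) <= phi l 0, phi l 0 <= M * (x l)%:R,
            - M * (1 - (x l)%:R) <= psi (src l) 0 - psi (dst l) 0 - a l * phi l 0 ^+ 2
          & psi (src l) 0 - psi (dst l) 0 + a l * phi l 0 ^+ 2 <= M * (x l)%:R]].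

Definition G2_min (M : R) phi psi x : Prop :=
  G2_feas M phi psi x /\
  forall phi' psi' x', G2_feas M phi' psi' x' -> G2_obj psi <= G2_obj psi'.

End Gas.

(* Main.v *)
Require Import Defs.
From mathcomp Require Import all_boot all_order all_algebra.
From mathcomp Require Import reals.
From mathcomp Require Import ring lra zify.
From Stdlib Require Import Classical.
Set Implicit Arguments. Unset Strict Implicit. Unset Printing Implicit Defensive.
Import Order.TTheory GRing.Theory Num.Theory.

Module RealPart.
Local Open Scope ring_scope.
Section Reals.
Variable R : realType.

Definition prel (a f D : R) : Prop :=
  (0 <= f /\ a * f ^+ 2 <= D) \/ (f <= 0 /\ D <= - (a * f ^+ 2)).

Definition gp (a f : R) : R := if 0 < f then a * f ^+ 2 else 0.
Definition gn (a f : R) : R := if f < 0 then a * f ^+ 2 else 0.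

Lemma rel_opp a f D : prel a f D -> prel a (- f) (- D).
Proof. rewrite /prel sqrrN; case=> [[h1 h2]|[h1 h2]]; [right|left]; split; lra. Qed.

Lemma gp_le a f D : 0 < a -> prel a f D -> 2 * gp a f <= `|D| + D.
Proof.
move=> a0 [[h1 h2]|[h1 h2]]; rewrite /gp.
  have hf : 0 <= a * f ^+ 2 by apply: mulr_ge0; [apply: ltW | apply: sqr_ge0].
  have -> : `|D| = D by apply/ger0_norm; lra.
  case: ifP => _; lra.
have -> : 0 < f = false by apply/negbTE; rewrite -leNgt.
have := ler_norm (- D); rewrite normrN; lra.
Qed.

Lemma gn_le a f D : 0 < a -> prel a f D -> 2 * gn a f <= `|D| - D.
Proof.
move=> a0 /rel_opp h; have := gp_le a0 h.
by rewrite normrN /gp /gn oppr_gt0 sqrrN.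
Qed.

Definition Dst (a f : R) := a * Num.sg f * f ^+ 2.

Lemma gp_eq a f : 0 < a -> 2 * gp a f = `|Dst a f| + Dst a f.
Proof.
move=> a0; rewrite /gp /Dst.
have hf : 0 <= a * f ^+ 2 by apply: mulr_ge0; [apply: ltW | apply: sqr_ge0].
case: (ltrgtP f 0) => hf0.
- rewrite ltr0_sg //=.
  have -> : a * -1 * f ^+ 2 = - (a * f ^+ 2) by ring.
  rewrite normrN ger0_norm //; lra.
- rewrite gtr0_sg //= mulr1 ger0_norm //; lra.
- rewrite hf0 sgr0 /= !mulr0 mul0r normr0; lra.
Qed.

Lemma gn_eq a f : 0 < a -> 2 * gn a f = `|Dst a f| - Dst a f.
Proof.
move=> a0; have := gp_eq (- f) a0.
rewrite /gp /gn /Dst oppr_gt0 sqrrN sgrN.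
have -> : a * - Num.sg f * f ^+ 2 = - (a * Num.sg f * f ^+ 2) by ring.
by rewrite normrN.
Qed.

Lemma Dst_rel a f : 0 < a -> prel a f (Dst a f).
Proof.
move=> a0; rewrite /prel /Dst.
case: (ltrgtP f 0) => hf0.
- right; rewrite ltr0_sg //; split; [lra|]; rewrite mulrN1; lra.
- left; rewrite gtr0_sg // mulr1; split; lra.
- left; rewrite hf0 sgr0 !mulr0 mul0r expr0n /= mulr0; split; lra.
Qed.

Lemma Dst_opp a f : Dst a (- f) = - Dst a f.
Proof. rewrite /Dst sgrN sqrrN; ring. Qed.

Lemma gp_mono a f g : 0 < a -> f <= g -> gp a f <= gp a g.
Proof.
move=> a0 fg; rewrite /gp.
case: ifP => hf; case: ifP => hg.
- apply: ler_wpM2l; first lra.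
  by rewrite ler_sqr // ?nnegrE; lra.
- lra.
- by apply: mulr_ge0; [apply: ltW | apply: sqr_ge0].
- lra.
Qed.

Lemma gp_strict a f g : 0 < a -> 0 <= f -> f < g -> gp a f < gp a g.
Proof.
move=> a0 f0 fg; rewrite /gp.
have -> : 0 < g by lra.
case: ifP => hf.
- by rewrite ltr_pM2l // ltr_sqr // ?nnegrE; lra.
- by rewrite mulr_gt0 // exprn_gt0 //; lra.
Qed.



Lemma cyc_L1 k (a f D fs : 'I_k -> R) (dl : R) :
  (0 < k)%N -> (forall i, 0 < a i) -> (forall i, prel (a i) (f i) (D i)) ->
  \sum_i D i = 0 -> \sum_i Dst (a i) (fs i) = 0 ->
  (forall i, f i = fs i + dl) -> 0 <= dl ->
  \sum_i `|Dst (a i) (fs i)| <= \sum_i `|D i| /\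
  (\sum_i `|D i| <= \sum_i `|Dst (a i) (fs i)| -> dl = 0).
Proof.
move=> k0 ha hr hD hDs hf hdl.
have eD : \sum_i `|D i| = \sum_i (`|D i| + D i) by rewrite big_split /= hD addr0.
have eS : \sum_i `|Dst (a i) (fs i)| = \sum_i (2 * gp (a i) (fs i)).
  by under [RHS]eq_bigr do rewrite gp_eq //; rewrite big_split /= hDs addr0.
have h1 : \sum_i (2 * gp (a i) (fs i)) <= \sum_i (2 * gp (a i) (f i)).
  by apply: ler_sum => i _; rewrite ler_pM2l // gp_mono // hf; lra.
have h2 : \sum_i (2 * gp (a i) (f i)) <= \sum_i (`|D i| + D i).
  by apply: ler_sum => i _; apply: gp_le.
split; first by rewrite eD eS; apply: le_trans h1 h2.
move=> hle; apply/eqP; rewrite eq_le hdl andbT leNgt; apply/negP => hpos.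
have [i0 hi0] : exists i, 0 <= fs i.
  case: (pickP (fun i => 0 <= fs i)) => [i0 hi0|hnone]; first by exists i0.
  have : \sum_i Dst (a i) (fs i) < \sum_(i < k) 0.
    apply: ltr_sum; first by apply/hasP; exists (Ordinal k0); rewrite ?mem_index_enum.
    move=> i _; have : fs i < 0 by rewrite ltNge hnone.
    move=> hi; rewrite /Dst ltr0_sg // mulrN1 mulNr oppr_lt0.
    by rewrite mulr_gt0 ?ha // exprn_even_gt0 //= lt_eqF.
  by rewrite hDs big1 // ltxx.
have h3 : \sum_i (2 * gp (a i) (fs i)) < \sum_i (2 * gp (a i) (f i)).
  rewrite (bigD1 i0) //= [X in _ < X](bigD1 i0) //=.
  apply: ltr_leD; first by rewrite ltr_pM2l // gp_strict // hf; lra.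
  by apply: ler_sum => i _; rewrite ler_pM2l // gp_mono // hf; lra.
have := lt_le_trans h3 h2; rewrite -eD -eS; lra.
Qed.



Lemma cyc_L2 k (a f D : 'I_k -> R) :
  (forall i, 0 < a i) -> (forall i, prel (a i) (f i) (D i)) ->
  \sum_i D i = 0 -> \sum_i Dst (a i) (f i) = 0 ->
  \sum_i `|D i| <= \sum_i `|Dst (a i) (f i)| ->
  forall i, D i = Dst (a i) (f i).
Proof.
move=> ha hr hD hDs hle.
have P1 : forall i, 0 <= (`|D i| + D i) - (`|Dst (a i) (f i)| + Dst (a i) (f i)).
  by move=> i; rewrite subr_ge0 -gp_eq //; apply: gp_le.
have P2 : forall i, 0 <= (`|D i| - D i) - (`|Dst (a i) (f i)| - Dst (a i) (f i)).
  by move=> i; rewrite subr_ge0 -gn_eq //; apply: gn_le.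
have S1 : \sum_i ((`|D i| + D i) - (`|Dst (a i) (f i)| + Dst (a i) (f i))) = 0.
  apply/eqP; rewrite eq_le; apply/andP; split; last by apply: sumr_ge0.
  rewrite sumrB !big_split /= hD hDs !addr0; lra.
have S2 : \sum_i ((`|D i| - D i) - (`|Dst (a i) (f i)| - Dst (a i) (f i))) = 0.
  apply/eqP; rewrite eq_le; apply/andP; split; last by apply: sumr_ge0.
  rewrite sumrB !big_split /= !sumrN hD hDs !oppr0 !addr0; lra.
move=> i.
have := @psumr_eq0P _ _ predT _ (fun i _ => P1 i) S1 i isT.
have := @psumr_eq0P _ _ predT _ (fun i _ => P2 i) S2 i isT.
lra.
Qed.

Lemma cyc_main k (a f D fs : 'I_k -> R) (dl : R) :
  (0 < k)%N -> (forall i, 0 < a i) -> (forall i, prel (a i) (f i) (D i)) ->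
  \sum_i D i = 0 -> \sum_i Dst (a i) (fs i) = 0 ->
  (forall i, f i = fs i + dl) ->
  \sum_i `|Dst (a i) (fs i)| <= \sum_i `|D i| /\
  (\sum_i `|D i| <= \sum_i `|Dst (a i) (fs i)| ->
     forall i, f i = fs i /\ D i = Dst (a i) (fs i)).
Proof.
move=> k0 ha hr hD hDs hf.
suff [H1 H2] : \sum_i `|Dst (a i) (fs i)| <= \sum_i `|D i| /\
  (\sum_i `|D i| <= \sum_i `|Dst (a i) (fs i)| -> dl = 0).
  split=> // hle; have dl0 := H2 hle.
  have ff : forall i, f i = fs i by move=> i; rewrite hf dl0 addr0.
  move=> i; split=> //.
  rewrite -ff; apply: cyc_L2 => //.
    by under eq_bigr do rewrite ff.
  by under [X in _ <= X]eq_bigr do rewrite ff.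
case: (lerP 0 dl) => hdl; first by apply: cyc_L1 hf hdl.
have := @cyc_L1 k a (fun i => - f i) (fun i => - D i) (fun i => - fs i) (- dl) k0 ha.
have hr' : forall i, prel (a i) (- f i) (- D i) by move=> i; apply: rel_opp.
move=> /(_ hr'); rewrite sumrN hD oppr0.
under eq_bigr do rewrite Dst_opp.
rewrite sumrN hDs oppr0.
move=> /(_ erefl erefl).
have hf' : forall i, - f i = - fs i + - dl by move=> i; rewrite hf opprD.
move=> /(_ hf'); rewrite oppr_ge0 (ltW hdl).
under eq_bigr do rewrite Dst_opp normrN.
move=> /(_ isT).
have -> : \sum_i `|- D i| = \sum_i `|D i| by apply: eq_bigr => i _; rewrite normrN.
case=> H1 H2; split=> // hle.
by apply/eqP; rewrite -oppr_eq0; apply/eqP; apply: H2.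
Qed.


Lemma edge_real a f D : 0 < a -> prel a f D ->
  `|Dst a f| <= `|D| /\ (`|D| <= `|Dst a f| -> D = Dst a f).
Proof.
move=> a0 h; have := gp_le a0 h; have := gn_le a0 h.
rewrite gp_eq // gn_eq //; split; [lra | move=> ?; lra].
Qed.


Lemma Dst_pos a y : 0 <= y -> Dst a y = a * y ^+ 2.
Proof.
rewrite le_eqVlt => /orP[/eqP<-|hy]; first by rewrite /Dst sgr0 mulr0 mul0r expr2 mul0r mulr0.
by rewrite /Dst gtr0_sg // mulr1.
Qed.

Lemma Dst_neg a y : y < 0 -> Dst a y = - (a * y ^+ 2).
Proof. by move=> hy; rewrite /Dst ltr0_sg // mulrN1 mulNr. Qed.

Lemma feas_real (a y M : R) : 0 < a -> `|y| + 2 * `|a| * y ^+ 2 <= M ->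
  [/\ - M * (1 - ((0 <= y)%R)%:R) <= y, y <= M * ((0 <= y)%R)%:R,
      - M * (1 - ((0 <= y)%R)%:R) <= Dst a y - a * y ^+ 2 &
      Dst a y + a * y ^+ 2 <= M * ((0 <= y)%R)%:R].
Proof.
move=> a0 hM; rewrite (gtr0_norm a0) in hM.
have hy2 : 0 <= a * y ^+ 2 by apply: mulr_ge0; [apply: ltW | apply: sqr_ge0].
case: (lerP 0 y) => hy /=.
  rewrite Dst_pos // ger0_norm // in hM *; rewrite subrr mulr0 mulr1; split; lra.
rewrite Dst_neg // ltr0_norm // in hM *; rewrite subr0 mulr1 mulr0; split; lra.
Qed.

Lemma prel_feas (a f D M : R) (xb : bool) :
  - M * (1 - xb%:R) <= f -> f <= M * xb%:R ->
  - M * (1 - xb%:R) <= D - a * f ^+ 2 -> D + a * f ^+ 2 <= M * xb%:R ->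
  prel a f D.
Proof.
case: xb => /=; rewrite ?subrr ?subr0 ?mulr0 ?mulr1 => h1 h2 h3 h4.
  by left; split; lra.
by right; split; lra.
Qed.

End Reals.
End RealPart.
Import RealPart.
Module GraphPart.
Section G.
Variables (N P : nat) (src dst : 'I_P -> 'I_N).
Hypothesis hloop : loopless src dst.

Definition adjF (F : pred 'I_P) : rel 'I_N :=
  fun u v => [exists e, ~~ F e && joins src dst e u v].

Lemma joins_sym e u v : joins src dst e u v = joins src dst e v u.
Proof. by rewrite /joins orbC. Qed.

Lemma joins_se e : joins src dst e (src e) (dst e).
Proof. by rewrite /joins !eqxx. Qed.

Lemma joins_inv e u v u' v' : joins src dst e u v -> joins src dst e u' v' ->
  (u = u' /\ v = v') \/ (u = v' /\ v = u').
Proof.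
rewrite /joins => /orP[/andP[/eqP<- /eqP<-]|/andP[/eqP<- /eqP<-]]
  /orP[/andP[/eqP<- /eqP<-]|/andP[/eqP<- /eqP<-]]; by [left|right].
Qed.

Lemma joins_neq e u v : joins src dst e u v -> u != v.
Proof.
have := hloop e.
by rewrite /joins => h /orP[/andP[/eqP<- /eqP<-]|/andP[/eqP<- /eqP<-]] //; rewrite eq_sym.
Qed.

Lemma path_cycle (F : pred 'I_P) u v l : F l -> joins src dst l v u ->
  connect (adjF F) u v ->
  exists k (es : 'I_k -> 'I_P) (vs : 'I_k -> 'I_N),
    is_cycle src dst es vs /\ l \in codom es /\ forall i, es i = l \/ ~~ F (es i).
Proof.
move=> Fl jl /connectP [p0 pth0 lst0]; subst v.
move: jl; case: (shortenP pth0) => p pth uq _ jl.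
set s := size p.
have s0 : (0 < s)%N.
  rewrite lt0n; apply/negP => /eqP/size0nil hp; move: jl; rewrite hp /=.
  by move=> /joins_neq; rewrite eqxx.
pose ws := u :: p.
pose eF x y := odflt l [pick e | ~~ F e && joins src dst e x y].
have heF : forall i, (i < s)%N ->
    ~~ F (eF (nth u ws i) (nth u p i)) && joins src dst (eF (nth u ws i) (nth u p i)) (nth u ws i) (nth u ws i.+1).
  move=> i his; move/pathP: pth => /(_ u i his) /existsP [e0 he0].
  rewrite /eF; case: pickP => [e -> //|none]; by rewrite none in he0.
pose vs : 'I_s.+1 -> 'I_N := fun i => nth u ws i.
pose es : 'I_s.+1 -> 'I_P := fun i => if (i < s)%N then eF (nth u ws i) (nth u p i) else l.
have vsinj : injective vs.
  move=> i j /eqP; rewrite /vs nth_uniq //; first by move/eqP/val_inj.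
have hws : forall i j, (i < s.+1)%N -> (j < s.+1)%N -> nth u ws i = nth u ws j -> i = j.
  by move=> i j hi hj /eqP; rewrite nth_uniq // => /eqP.
exists s.+1, es, vs; split; last split.
- split=> //.
  + move=> i j; rewrite /es.
    case: ifP => hi; case: ifP => hj.
    * move=> eij; have /andP[_ j1] := heF i hi; have /andP[_ j2] := heF j hj.
      rewrite eij in j1.
      case: (joins_inv j1 j2) => [[e1 e2]|[e1 e2]].
        by apply: val_inj; apply: hws e1 => //; apply: ltnW.
      have := hws _ _ (leq_trans hi (leqnSn _)) (hj : (j.+1 < s.+1)%N) e1.
      have := hws _ _ (hi : (i.+1 < s.+1)%N) (leq_trans hj (leqnSn _)) e2.
      lia.
    * by move=> eij; have /andP[] := heF i hi; rewrite eij Fl.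
    * by move=> eij; have /andP[] := heF j hj; rewrite -eij Fl.
    * move=> _; apply: val_inj => /=.
      have := ltn_ord i; have := ltn_ord j; move: hi hj => /negbT hi /negbT hj.
      rewrite -leqNgt in hi; rewrite -leqNgt in hj; lia.
  + move=> i; rewrite /es /vs.
    case: ifP => hi.
    * have -> : nat_of_ord (ordS i) = i.+1.
        by rewrite /= modn_small.
      by have /andP[_ ->] := heF i hi.
    * have his : nat_of_ord i = s.
        have := ltn_ord i; move/negbT: hi; rewrite -leqNgt; lia.
      have -> : nat_of_ord (ordS i) = 0%N by rewrite /= his modnn.
      rewrite his /=.
      have -> : nth u ws s = last u p.
        by rewrite /ws -[s]/((size (u :: p)).-1) nth_last.
      done.
- apply/codomP; exists (Ordinal (ltnSn s)); by rewrite /es /= ltnn.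
- move=> i; rewrite /es; case: ifP => hi; last by left.
  by right; have /andP[] := heF i hi.
Qed.


Local Open Scope ring_scope.

Lemma adjF_sym F u v : adjF F u v = adjF F v u.
Proof.
by apply/existsP/existsP => -[e he]; exists e; rewrite joins_sym.
Qed.

Lemma adjF_edge F e : ~~ F e -> connect (adjF F) (src e) (dst e) /\ connect (adjF F) (dst e) (src e).
Proof.
move=> nF; split; apply: connect1; apply/existsP; exists e; rewrite nF /=.
  exact: joins_se.
by rewrite joins_sym joins_se.
Qed.

Lemma cut_sum (R : realType) (F : pred 'I_P) w (c : 'cV[R]_P) :
  (incidence R src dst)^T *m c = 0 ->
  \sum_(e | F e) c e 0 * ((connect (adjF F) w (src e))%:R - (connect (adjF F) w (dst e))%:R) = 0.
Proof.
move=> hc.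
set S := connect (adjF F) w.
have delta : forall (f : 'I_N -> R) a, \sum_n f n * (a == n)%:R = f a.
  move=> f a; rewrite (bigD1 a) //= eqxx mulr1 big1 ?addr0 // => n /negbTE hn.
  by rewrite eq_sym hn mulr0.
have key : forall e, \sum_n (S n)%:R * incidence R src dst e n = (S (src e))%:R - (S (dst e))%:R.
  move=> e.
  have -> : \sum_n (S n)%:R * incidence R src dst e n =
            \sum_n ((S n)%:R * (src e == n)%:R) - \sum_n ((S n)%:R * (dst e == n)%:R).
    rewrite -sumrB; apply: eq_bigr => n _; rewrite mxE -mulrBr; congr (_ * _).
    have := hloop e.
    move=> hne; case: (eqVneq (src e) n) => [<-|h1].
      by rewrite eq_sym (negbTE hne) subr0.
    by case: (dst e == n); rewrite /= ?subr0 ?sub0r.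
  by rewrite !delta.
have : \sum_n (S n)%:R * ((incidence R src dst)^T *m c) n 0 = 0.
  by rewrite hc big1 // => n _; rewrite mxE mulr0.
under eq_bigr do rewrite mxE mulr_sumr.
rewrite exchange_big /=.
under eq_bigr do (under eq_bigr do rewrite mxE mulrA mulrC; rewrite -mulr_sumr key).
rewrite (bigID F) /= => h; rewrite -[RHS]h [X in _ = _ + X]big1 ?addr0 //.
move=> e /adjF_edge [h1 h2].
have -> : S (src e) = S (dst e).
  apply/idP/idP => hs; [exact: connect_trans hs h1 | exact: connect_trans hs h2].
by rewrite subrr mulr0.
Qed.


Lemma bridge_zero (R : realType) (c : 'cV[R]_P) l :
  (incidence R src dst)^T *m c = 0 -> ~ on_cycle src dst l -> c l 0 = 0.
Proof.
move=> hc hnc.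
have := cut_sum (pred1 l) (src l) hc.
rewrite (big_pred1 l) // connect0.
have -> : connect (adjF (pred1 l)) (src l) (dst l) = false.
  apply/negP => hcon.
  have jl : joins src dst l (dst l) (src l) by rewrite joins_sym joins_se.
  have [k [es [vs [h1 [h2 _]]]]] := path_cycle (eqxx l : pred1 l l) jl hcon.
  by apply: hnc; exists k, es, vs.
by rewrite subr0 mulr1.
Qed.

Lemma noreach k (es : 'I_k -> 'I_P) (vs : 'I_k -> 'I_N) (F : pred 'I_P) l0 e' x w :
  at_most_one_cycle src dst -> is_cycle src dst es vs -> F l0 -> joins src dst l0 x w ->
  l0 \in codom es -> e' \in codom es -> F e' -> e' != l0 ->
  ~~ connect (adjF F) w x.
Proof.
move=> A2 hcyc Fl0 jl hl0 he' Fe' ne; apply/negP => hcon.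
have [k' [es' [vs' [hc' [hl0' hall]]]]] := path_cycle Fl0 jl hcon.
have := A2 l0 _ _ _ _ _ _ hcyc hc' hl0 hl0' e'; rewrite he' => /esym /codomP [j hj].
case: (hall j) => [h|h]; first by move: ne; rewrite hj h eqxx.
by move: h; rewrite -hj Fe'.
Qed.

Definition ori (R : realType) k (es : 'I_k -> 'I_P) (vs : 'I_k -> 'I_N) i : R :=
  if src (es i) == vs i then 1 else -1.

Lemma term_val (R : realType) (S : pred 'I_N) e x y (cc : R) :
  joins src dst e x y -> S x = false -> S y = true ->
  cc * ((S (src e))%:R - (S (dst e))%:R) = (if src e == y then 1 else -1) * cc.
Proof.
move=> j Sx Sy; case: (joins_inv j (joins_se e)) => [[<- <-]|[<- <-]].
  have : x != y by apply: joins_neq j.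
  by move/negbTE => ->; rewrite Sx Sy /=; rewrite sub0r mulrN1 mulN1r.
by rewrite eqxx Sx Sy /= subr0 mulr1 mul1r.
Qed.

Lemma sgn_flip (R : realType) e x y : joins src dst e x y ->
  ((if src e == y then 1 else -1) : R) = - (if src e == x then 1 else -1).
Proof.
move=> j; case: (joins_inv j (joins_se e)) => [[hx _]|[_ hy]].
  have : x != y by apply: joins_neq j.
  by rewrite -hx => /negbTE ->; rewrite eqxx.
have : x != y by apply: joins_neq j.
rewrite -hy eq_sym.
by move/negbTE => ->; rewrite eqxx opprK.
Qed.


Lemma cyc_step (R : realType) (c : 'cV[R]_P) k (es : 'I_k -> 'I_P) (vs : 'I_k -> 'I_N) :
  at_most_one_cycle src dst -> (incidence R src dst)^T *m c = 0 ->
  is_cycle src dst es vs ->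
  forall i, ori R es vs (ordS i) * c (es (ordS i)) 0 = ori R es vs i * c (es i) 0.
Proof.
move=> A2 hc hcyc i; have [k0 esinj vsinj hj] := hcyc.
set i1 := ordS i; set i2 := ordS i1; set w := vs i1.
have j1 : joins src dst (es i) (vs i) w := hj i.
have j2 : joins src dst (es i1) (vs i2) w by rewrite joins_sym; exact: hj i1.
have ne : es i1 != es i.
  apply/negP => /eqP /esinj h; move: (joins_neq j1); by rewrite /w h eqxx.
pose F := fun e => (e == es i) || (e == es i1).
have := cut_sum F w hc.
rewrite (bigD1 (es i)) /=; last by rewrite /F eqxx.
rewrite (big_pred1 (es i1)); last first.
  move=> e /=; rewrite /F; case: (eqVneq e (es i)) => [->|h] /=.
    by rewrite eq_sym (negbTE ne).
  by rewrite andbT.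
have Sw : connect (adjF F) w w by apply: connect0.
have Svi : connect (adjF F) w (vs i) = false.
  apply/negbTE; apply: (noreach (e' := es i1) A2 hcyc _ j1) => //;
    rewrite /F ?codom_f ?eqxx ?orbT //.
have Svi2 : connect (adjF F) w (vs i2) = false.
  apply/negbTE; apply: (noreach (e' := es i) A2 hcyc _ j2) => //;
    rewrite /F ?codom_f ?eqxx ?orbT 1?eq_sym //.
rewrite (term_val _ j1 Svi Sw) (term_val _ j2 Svi2 Sw) (sgn_flip R j1).
rewrite /ori -/i1 -/w.
lra.
Qed.

Lemma cyc_const (R : realType) (c : 'cV[R]_P) k (es : 'I_k -> 'I_P) (vs : 'I_k -> 'I_N) :
  at_most_one_cycle src dst -> (incidence R src dst)^T *m c = 0 ->
  is_cycle src dst es vs -> forall (k0 : (0 < k)%N) i,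
  ori R es vs i * c (es i) 0 = ori R es vs (Ordinal k0) * c (es (Ordinal k0)) 0.
Proof.
move=> A2 hc hcyc k0 [n hn].
elim: n hn => [|n IH] hn; first by rewrite (bool_irrelevance hn k0).
have hn' : (n < k)%N by apply: ltnW.
rewrite -(IH hn') -(cyc_step A2 hc hcyc (Ordinal hn')).
have -> : ordS (Ordinal hn') = Ordinal hn by apply: val_inj; rewrite /= modn_small.
done.
Qed.


Lemma ori_pm (R : realType) k (es : 'I_k -> 'I_P) (vs : 'I_k -> 'I_N) i :
  ori R es vs i = 1 \/ ori R es vs i = -1.
Proof. by rewrite /ori; case: ifP; [left|right]. Qed.

Lemma cyc_tele (R : realType) (psi : 'I_N -> R) k (es : 'I_k -> 'I_P) (vs : 'I_k -> 'I_N) :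
  is_cycle src dst es vs ->
  \sum_i ori R es vs i * (psi (src (es i)) - psi (dst (es i))) = 0.
Proof.
move=> [k0 _ _ hj].
have -> : \sum_i ori R es vs i * (psi (src (es i)) - psi (dst (es i))) =
          \sum_i (psi (vs i) - psi (vs (ordS i))).
  apply: eq_bigr => i _; rewrite /ori.
  have j := hj i; have ne := joins_neq j.
  case: (joins_inv j (joins_se (es i))) => [[<- <-]|[<- <-]].
    by rewrite eqxx mul1r.
  by rewrite eq_sym (negbTE ne) mulN1r opprB.
by rewrite sumrB (reindex_inj (@ordS_inj k)) /= subrr.
Qed.

End G.
End GraphPart.
Import GraphPart.
Local Open Scope ring_scope.
Lemma mem_imcod (T : finType) k (es : 'I_k -> T) e :
  (e \in [set es i | i in [set: 'I_k]]) = (e \in codom es).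
Proof.
by apply/imsetP/codomP => [[i _ ->]|[i ->]]; [exists i | exists i; rewrite ?inE].
Qed.

Theorem theorem2 (R : realType) (N P : nat) (src dst : 'I_P -> 'I_N)
  (comp : pred 'I_P) (r : 'I_N) (psir : R) (q : 'cV[R]_N)
  (a alpha : 'I_P -> R) :
  loopless src dst ->
  connected_graph src dst ->
  (forall l, comp l -> ~ on_cycle src dst l) ->
  at_most_one_cycle src dst ->
  \sum_(n < N) q n 0 = 0 ->
  (forall l, ~~ comp l -> 0 < a l) ->
  (forall l, comp l -> 0 < alpha l) ->
  (exists phi psi, G1_sol src dst comp r psir q a alpha phi psi) ->
  exists M0 : R, forall M : R, M0 <= M ->
    forall phi psi x, G2_min src dst comp r psir q a alpha M phi psi x ->
      G1_sol src dst comp r psir q a alpha phi psi.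
Proof.
move=> hloop hconn A1 A2 _ ha halpha [phis [psis [hrs hAs hps hnns hcs]]].
pose M0 := \sum_l (`|phis l 0| + 2 * `|a l| * phis l 0 ^+ 2).
exists M0 => M hM phi psi x [[hr hA hc hp] hmin].
have tl : forall l, `|phis l 0| + 2 * `|a l| * phis l 0 ^+ 2 <= M.
  move=> l; apply: le_trans hM; rewrite /M0 (bigD1 l) //= lerDl.
  apply: sumr_ge0 => i _; apply: addr_ge0 => //.
  by apply: mulr_ge0; [apply: mulr_ge0 | apply: sqr_ge0].
pose xs := fun l => (0 <= phis l 0)%R.
have feas_s : G2_feas src dst comp r psir q a alpha M phis psis xs.
  split=> // l hl; rewrite hps //; exact: feas_real (ha l hl) (tl l).
have hobj := hmin _ _ _ feas_s.
pose d (ps : 'cV[R]_N) l := ps (src l) 0 - ps (dst l) 0.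
pose c := phi - phis.
have hcc : (incidence R src dst)^T *m c = 0 by rewrite mulmxBr hA hAs subrr.
have cE : forall l, c l 0 = phi l 0 - phis l 0 by move=> l; rewrite !mxE.
have hrel : forall l, ~~ comp l -> prel (a l) (phi l 0) (d psi l).
  by move=> l hl; have [h1 h2 h3 h4] := hp l hl; apply: prel_feas h1 h2 h3 h4.
have hDs : forall l, ~~ comp l -> d psis l = Dst (a l) (phis l 0) by move=> l hl; rewrite /d hps.
have hbr : forall l, ~ on_cycle src dst l -> phi l 0 = phis l 0.
  move=> l hl; have := bridge_zero hloop hcc hl; rewrite cE; lra.
pose Fx l := `|d psi l| - `|d psis l|.
pose Pr := fun l (g : {set 'I_P}) =>
  (exists k (es : 'I_k -> 'I_P) (vs : 'I_k -> 'I_N), is_cycle src dst es vs /\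
      l \in codom es /\ g = [set es i | i in [set: 'I_k]]) \/
  (~ on_cycle src dst l /\ g = [set l]).
have Hex : forall l, exists g, Pr l g.
  move=> l; case: (classic (on_cycle src dst l)) => [[k [es [vs [h1 h2]]]]|hn].
    by exists [set es i | i in [set: 'I_k]]; left; exists k, es, vs.
  by exists [set l]; right.
have [grp hgrp] := fin_all_exists Hex.
have grp_cyc : forall l k (es : 'I_k -> 'I_P) (vs : 'I_k -> 'I_N), is_cycle src dst es vs ->
    l \in codom es -> forall e, (e \in grp l) = (e \in codom es).
  move=> l k es vs hcy hl e; case: (hgrp l) => [[k' [es' [vs' [h1 [h2 ->]]]]]|[hn _]].
    rewrite mem_imcod; exact: A2 l _ _ _ _ _ _ h1 hcy h2 hl e.
  by exfalso; apply: hn; exists k, es, vs.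
have grp_self : forall l, l \in grp l.
  move=> l; case: (hgrp l) => [[k' [es' [vs' [h1 [h2 ->]]]]]|[hn ->]].
    by rewrite mem_imcod.
  by rewrite inE.
have grp_mem : forall l0 l, ~~ comp l0 -> (l \in grp l0) = (~~ comp l) && (grp l == grp l0).
  move=> l0 l hl0; case: (hgrp l0) => [[k [es [vs [h1 [h2 h3]]]]]|[hn h3]].
    apply/idP/idP.
      move=> hl; have hl' : l \in codom es by rewrite -(grp_cyc _ _ _ _ h1 h2).
      apply/andP; split.
        by apply/negP => /A1; apply; exists k, es, vs.
      apply/eqP/setP => e; by rewrite (grp_cyc _ _ _ _ h1 hl') (grp_cyc _ _ _ _ h1 h2).
    by move=> /andP[_ /eqP <-]; apply: grp_self.
  rewrite h3 inE; apply/idP/idP => [/eqP -> | /andP[_ /eqP h]].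
    by rewrite hl0 h3 eqxx.
  by have := grp_self l; rewrite h inE.
have grp_lem : forall l, ~~ comp l -> 0 <= \sum_(e in grp l) Fx e /\
    (\sum_(e in grp l) Fx e <= 0 -> phi l 0 = phis l 0 /\ d psi l = d psis l).
  move=> l hl; case: (hgrp l) => [[k [es [vs [h1 [h2 ->]]]]]|[hn ->]]; last first.
    rewrite big_set1 /Fx hDs // -(hbr l hn).
    have [H1 H2] := edge_real (ha l hl) (hrel l hl).
    split; first by rewrite subr_ge0.
    by rewrite subr_le0 => /H2 ->; split=> //; rewrite (hbr l hn).
  have [k0 esinj _ _] := h1.
  rewrite big_imset /=; last by move=> i j _ _; apply: esinj.
  have hpi : forall i, ~~ comp (es i).
    by move=> i; apply/negP => /A1; apply; exists k, es, vs; split=> //; apply: codom_f.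
  pose o := ori src R es vs.
  pose ai := fun i => a (es i).
  pose fi := fun i => o i * phi (es i) 0.
  pose fsi := fun i => o i * phis (es i) 0.
  pose Di := fun i => o i * d psi (es i).
  pose dl := o (Ordinal k0) * c (es (Ordinal k0)) 0.
  have oabs : forall i (y : R), `|o i * y| = `|y|.
    by move=> i y; rewrite /o; case: (ori_pm src R es vs i) => ->; rewrite ?mul1r ?mulN1r ?normrN.
  have oDst : forall i y, Dst (ai i) (o i * y) = o i * Dst (ai i) y.
    by move=> i y; rewrite /o; case: (ori_pm src R es vs i) => ->; rewrite ?mul1r ?mulN1r ?Dst_opp.
  have ocan : forall i (y z : R), o i * y = o i * z -> y = z.
    move=> i y z; rewrite /o; case: (ori_pm src R es vs i) => ->; rewrite ?mul1r ?mulN1r //.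
    exact: oppr_inj.
  have := @cyc_main R k ai fi Di fsi dl k0.
  case.
  - by move=> i; apply: ha.
  - move=> i; rewrite /fi /Di /o; case: (ori_pm src R es vs i) => ->; rewrite ?mul1r ?mulN1r.
      exact: hrel.
    by apply: rel_opp; apply: hrel.
  - exact: (cyc_tele hloop (fun n => psi n 0) h1).
  - under eq_bigr do rewrite oDst /ai -hDs //.
    exact: (cyc_tele hloop (fun n => psis n 0) h1).
  - move=> i; rewrite /fi /fsi /dl /o -(cyc_const hloop A2 hcc h1 k0 i) cE; ring.
  move=> H1 H2.
  have eS : \sum_(i in [set: 'I_k]) Fx (es i) = \sum_i `|Di i| - \sum_i `|Dst (ai i) (fsi i)|.
    rewrite -sumrB (eq_bigl xpredT); last by move=> i; rewrite inE.
    apply: eq_bigr => i _.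
    by rewrite /Fx /Di /fsi oDst !oabs hDs.
  rewrite eS; split; first by rewrite subr_ge0.
  rewrite subr_le0 => /H2 H3.
  have /codomP [i ->] := h2.
  have [e1 e2] := H3 i.
  split; first exact: ocan e1.
  apply: (ocan i); rewrite -/(Di i) e2 /fsi oDst /ai -hDs //.
pose Pset := [set l | ~~ comp l].
have hsum : \sum_(l in Pset) Fx l <= 0.
  move: hobj; rewrite /G2_obj -subr_le0 -sumrB.
  by rewrite (eq_bigl (fun l => l \in Pset)) // => l; rewrite inE.
rewrite (partition_big_imset grp) /= in hsum.
have inner : forall l0, l0 \in Pset ->
    \sum_(l in Pset | grp l == grp l0) Fx l = \sum_(e in grp l0) Fx e.
  move=> l0; rewrite inE => hl0; apply: eq_bigl => l; by rewrite grp_mem // inE.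
have hnn : forall C, C \in [set grp l | l in Pset] ->
    0 <= \sum_(l in Pset | grp l == C) Fx l.
  by move=> C /imsetP [l0 hl0 ->]; rewrite inner //; apply: (grp_lem l0 _).1; rewrite inE in hl0.
have hz : \sum_(C in [set grp l | l in Pset]) \sum_(l in Pset | grp l == C) Fx l = 0.
  by apply/eqP; rewrite eq_le hsum /=; apply: sumr_ge0.
have pipe_eq : forall l, ~~ comp l -> phi l 0 = phis l 0 /\ d psi l = d psis l.
  move=> l hl; have hlP : l \in Pset by rewrite inE.
  have := @psumr_eq0P _ _ (fun C => C \in [set grp l | l in Pset]) _ hnn hz (grp l).
  rewrite imset_f // inner // => /(_ isT) h0.
  by apply: (grp_lem l hl).2; rewrite h0.
have psi_eq : forall n, psi n 0 = psis n 0.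
  have gen : forall p y, path (adj src dst) y p -> psi y 0 = psis y 0 ->
      psi (last y p) 0 = psis (last y p) 0.
    elim=> [//|z p IH] y /= /andP[/existsP [e je] pth] hy; apply: IH pth _.
    case: (boolP (comp e)) => he.
      have [hce _] := hc e he; have [hcse _] := hcs e he; have a0 := halpha e he.
      move: je; rewrite /joins => /orP[/andP[/eqP hs /eqP hd]|/andP[/eqP hs /eqP hd]];
        rewrite hs hd in hce hcse.
        by rewrite hce hcse hy.
      apply: (mulfI (lt0r_neq0 a0)); by rewrite -hce -hcse hy.
    have [_ hde] := pipe_eq e he; rewrite /d in hde.
    move: je; rewrite /joins => /orP[/andP[/eqP hs /eqP hd]|/andP[/eqP hs /eqP hd]];
      rewrite hs hd in hde; lra.
  move=> n; have /connectP [p pth ->] := hconn r n.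
  by apply: gen pth _; rewrite hr hrs.
split=> //.
- move=> l hl; have [h1 h2] := pipe_eq l hl.
  by rewrite -/(d psi l) h2 hDs // h1.
- by move=> n; rewrite psi_eq.
Qed.
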